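(* For integers $k$ and $t$ with $k \geq 2$ and $0 \leq t \leq k$, $$gr_k(K_3 : tP_5, (k-t)P_3) \leq t+4,$$ i.e., for every $n \geq t+4$, every coloring of the edges of $K_n$ with colors from $\{1,\dots,k\}$ contains either a rainbow triangle, or a monochromatic path $P_5$ in some color $j \in \{1,\dots,t\}$, or a monochromatic path $P_3$ in some color $j \in \{t+1,\dots,k\}$.
   Context: $P_m$ denotes the path on $m$ vertices. A rainbow triangle is a triangle whose three edges have three distinct colors. For graphs $G, H_1,\dots,H_k$, $gr_k(G : H_1,\dots,H_k)$ is the minimum integer $N$ such that for every $n \geq N$, every coloring of the edges of $K_n$ using colors $1,\dots,k$ contains either a rainbow copy of $G$ or, for some $i$, a copy of $H_i$ all of whose edges have color $i$. The notation $gr_k(G : tH, (k-t)K)$ means $gr_k(G : H,\dots,H,K,\dots,K)$ with $H$ appearing $t$ times (colors $1,\dots,t$) and $K$ appearing $k-t$ times (colors $t+1,\dots,k$). *)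

(* Defs.v *)
From mathcomp Require Import all_boot.
Set Implicit Arguments. Unset Strict Implicit. Unset Printing Implicit Defensive.

(* An edge-colouring of K_n with k colours: vertices 'I_n, colours 'I_k
   (colour index i stands for colour i+1 of the paper).  Only the values
   on pairs of distinct vertices matter; c must be symmetric. *)
Definition edge_coloring n k (c : 'I_n -> 'I_n -> 'I_k) : Prop :=
  forall x y : 'I_n, c x y = c y x.

Definition has_rainbow_triangle n k (c : 'I_n -> 'I_n -> 'I_k) : Prop :=
  exists x y z : 'I_n,
    [/\ x != y, y != z, x != z &
     [/\ c x y != c y z, c y z != c x z & c x y != c x z]].

(* a copy of the path P_m (m vertices) all of whose edges have colour j:
   an injective sequence of m vertices with consecutive pairs coloured j *)
Definition has_mono_path n k (c : 'I_n -> 'I_n -> 'I_k) (m : nat) (j : 'I_k) : Prop :=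
  exists v : 'I_m -> 'I_n,
    injective v /\
    forall i1 i2 : 'I_m, val i2 = (val i1).+1 -> c (v i1) (v i2) = j.

(* Main.v *)
Require Import Defs.
From mathcomp Require Import all_boot zify.
From Stdlib Require Import Classical.

Set Implicit Arguments. Unset Strict Implicit. Unset Printing Implicit Defensive.

Ltac close_neq :=
  match goal with
  | H : is_true (?x != ?x) |- _ => by rewrite eqxx in H
  | H : is_true (?x \notin ?A), H' : is_true (?x \in ?A) |- _ => by rewrite H' in H
  end.
Ltac neqt := apply/eqP => ?; subst; close_neq.
Ltac dist := rewrite /= !inE !negb_or ?andbT; repeat (apply/andP; split); try neqt.

Lemma card3le (T : finType) (a b d : T) : #|[set a; b; d]| <= 3.
Proof. rewrite cardsU cards2 cards1; lia. Qed.

Lemma card4le (T : finType) (a b d e : T) : #|[set a; b; d; e]| <= 4.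
Proof. rewrite !cardsU !cards1; lia. Qed.

Section Main.
Variables (n k : nat) (c : 'I_n -> 'I_n -> 'I_k).
Hypothesis hc : forall x y, c x y = c y x.

Definition NR (W : {set 'I_n}) := forall x y z, x \in W -> y \in W -> z \in W ->
  x != y -> y != z -> x != z -> [|| c x y == c y z, c y z == c x z | c x y == c x z].

Definition N5 (W : {set 'I_n}) (S : {set 'I_k}) := forall p1 p2 p3 p4 p5 j,
  p1 \in W -> p2 \in W -> p3 \in W -> p4 \in W -> p5 \in W ->
  uniq [:: p1; p2; p3; p4; p5] -> j \in S ->
  c p1 p2 = j -> c p2 p3 = j -> c p3 p4 = j -> c p4 p5 = j -> False.

Definition N3 (W : {set 'I_n}) (S : {set 'I_k}) := forall a b d,
  a \in W -> b \in W -> d \in W -> a != b -> b != d -> a != d ->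
  c a b = c b d -> c a b \in S.

Lemma tri W x y z : NR W -> x \in W -> y \in W -> z \in W ->
  x != y -> y != z -> x != z -> c x y != c x z -> c x y != c y z -> c x z = c y z.
Proof.
move=> hR hx hy hz xy yz xz h1 h2.
have := hR x y z hx hy hz xy yz xz.
rewrite (negbTE h1) (negbTE h2) /= orbF => /eqP ->.
by [].
Qed.

Definition IHP (W : {set 'I_n}) (S : {set 'I_k}) := forall (W' : {set 'I_n}) (S' : {set 'I_k}),
  W' \subset W -> S' \subset S -> #|W'| + #|S'| < #|W| + #|S| ->
  N3 W' S' -> #|S'| + 4 <= #|W'| -> False.

Lemma caseA W S : NR W -> N5 W S -> N3 W S -> #|S| + 4 <= #|W| -> IHP W S ->
  forall u w, u \in W -> w \in W -> u != w -> c u w \notin S -> False.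
Proof.
move=> hR h5 h3 hcard IH u w hu hw uw hm.
set W' := W :\: [set u; w].
have inW' x : (x \in W') = [&& x != u, x != w & x \in W].
  by rewrite !inE negb_or andbA.
have A1 x : x \in W' -> c u x = c w x.
  rewrite inW' => /and3P [xu xw xW].
  have h1 : c u x != c u w.
    apply/eqP => E; move/negP: hm; apply; rewrite -E -hc.
    apply: (h3 x u w) => //; by rewrite hc E.
  have h2 : c w x != c u w.
    apply/eqP => E; move/negP: hm; apply; rewrite -E -hc.
    apply: (h3 x w u) => //; [by rewrite eq_sym | by rewrite hc E hc].
  apply: (tri hR hu hw xW) => //; by rewrite eq_sym.
have A2 x : x \in W' -> c u x \in S.
  move=> hx; have := hx; rewrite inW' => /and3P [xu xw xW].
  apply: (h3 u x w) => //; [by rewrite eq_sym | by rewrite A1 // hc].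
pose Nj j := [set x in W' | c u x == j].
have NjP j x : (x \in Nj j) = (x \in W') && (c u x == j) by rewrite inE.
have A3 j : #|Nj j| <= 2.
  rewrite leqNgt; apply/negP => /card_gt2P [x1 [x2 [x3 [[]]]]].
  rewrite !NjP => /andP [h1 /eqP e1] /andP [h2 /eqP e2] /andP [h3' /eqP e3] [n12 n23 n31].
  have := h1; have := h2; have := h3'.
  rewrite !inW' => /and3P [x3u x3w x3W] /and3P [x2u x2w x2W] /and3P [x1u x1w x1W].
  apply: (h5 x1 u x2 w x3 j) => //.
  - dist.
  - by rewrite -e1 A2.
  - by rewrite hc.
  - by rewrite hc -A1.
  - by rewrite -A1.
have A4 j x1 y : x1 \in Nj j -> 1 < #|Nj j| -> y \in W' -> y != x1 -> c x1 y = j -> y \in Nj j.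
  move=> hx1 hN hy yx1 e; apply/negPn/negP => hyN.
  have : 0 < #|Nj j :\ x1| by move: hN; rewrite (cardsD1 x1) hx1.
  case/card_gt0P => x2; rewrite in_setD1 => /andP [x21 hx2].
  have := hx1; have := hx2.
  rewrite !NjP => /andP [hx2W' /eqP e2] /andP [hx1W' /eqP e1].
  have := hy; have := hx1W'; have := hx2W'.
  rewrite !inW' => /and3P [x2u x2w x2W] /and3P [x1u x1w x1W] /and3P [yu yw yW].
  have yx2 : y != x2 by apply/eqP => E; subst; rewrite hx2 in hyN.
  apply: (h5 y x1 u x2 w j) => //.
  - dist.
  - by rewrite -e1 A2.
  - by rewrite hc.
  - by rewrite hc.
  - by rewrite hc -A1.
pose D := [set j in S | #|Nj j| == 2].
have A5 : N3 W' (S :\: D).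
  move=> a b d ha hb hd ab bd ad e.
  have hW : W' \subset W by apply: subsetDl.
  have hS : c a b \in S by apply: (h3 a b d) => //; apply: (subsetP hW).
  rewrite inE hS andbT inE hS /=; apply/negP => /eqP hN2.
  set j := c a b in e hS hN2.
  have hN1 : 1 < #|Nj j| by rewrite hN2.
  case: (boolP (b \in Nj j)) => hbN.
  - have haN : a \in Nj j by apply: (A4 j b a) => //; rewrite 1?eq_sym // hc.
    have hdN : d \in Nj j by apply: (A4 j b d) => //; rewrite 1?eq_sym // -e.
    have : 2 < #|Nj j| by apply/card_gt2P; exists a, b, d; split; split => //; by rewrite eq_sym.
    by rewrite hN2.
  - have haN : a \notin Nj j.
      apply/negP => haN; move/negP: hbN; apply; apply: (A4 j a b) => //.
      by rewrite eq_sym.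
    have hdN : d \notin Nj j.
      apply/negP => hdN; move/negP: hbN; apply; apply: (A4 j d b) => //.
      by rewrite hc -e.
    have := ha; have := hb; have := hd.
    rewrite !inW' => /and3P [du dw dW] /and3P [bu bw bW] /and3P [au aw aW].
    move: haN hbN hdN; rewrite !NjP ha hb hd /= => haN hbN hdN.
    have e1 : c u a = c u b.
      rewrite hc (hc u b); apply: (tri hR aW bW hu) => //; by rewrite eq_sym -hc.
    have e2 : c u b = c u d.
      rewrite hc (hc u d); apply: (tri hR bW dW hu) => //; by rewrite -e eq_sym -hc.
    have : 2 < #|Nj (c u b)|.
      apply/card_gt2P; exists a, b, d; rewrite !NjP ha hb hd e1 e2 !eqxx.
      split; split => //; by rewrite eq_sym.
    by rewrite ltnNge A3.
have A6 : #|W'| <= #|S| + #|D|.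
  have -> : #|W'| = \sum_(j in S) #|Nj j|.
    rewrite -sum1_card (partition_big (c u) (mem S)) /=; last by move=> x; apply: A2.
    apply: eq_bigr => j hj; rewrite -sum1_card; apply: eq_bigl => x; by rewrite NjP.
  apply: (@leq_trans (\sum_(j in S) (1 + (#|Nj j| == 2)))).
    apply: leq_sum => j _; have := A3 j; case: (#|Nj j| == 2) /eqP; lia.
  rewrite big_split /= sum1_card leq_add2l.
  have -> : \sum_(j in S) (#|Nj j| == 2 : nat) = \sum_(j in S | #|Nj j| == 2) 1.
    by rewrite big_mkcondr; apply: eq_bigr => j _; case: (_ == _).
  by rewrite sum1_card; apply: eq_leq; apply: eq_card => j; rewrite inE.
have hDS : D \subset S by apply/subsetP => j; rewrite inE => /andP [].
have cW' : #|W'| + 2 = #|W|.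
  have := cardsD W [set u; w]; rewrite (setIidPr _); last first.
    by apply/subsetP => x; rewrite !inE => /orP [] /eqP ->.
  rewrite cards2 uw /= /W' => ->; rewrite subnK //; exact: leq_trans (isT : 2 <= 4) (leq_trans (leq_addl _ _) hcard).
have cS : #|S :\: D| + #|D| = #|S|.
  by rewrite cardsD (setIidPr hDS) subnK // subset_leq_card.
apply: (IH W' (S :\: D)) => //.
- by apply: subsetDl.
- by apply: subsetDl.
- have : 2 <= #|D| by lia.
  lia.
- lia.
Qed.


Lemma caseR W S : NR W -> N5 W S -> N3 W S -> #|S| + 4 <= #|W| -> IHP W S ->
  forall M : {set 'I_n}, M \subset W -> M != W -> 2 < #|M| ->
  (forall y x1 x2, y \in W -> y \notin M -> x1 \in M -> x2 \in M -> c y x1 = c y x2) ->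
  False.
Proof.
move=> hR h5 h3 hcard IH M hMW hMne hM3 hmod.
have [x0 [x1 [x2 [[hx0 hx1 hx2] [n01 n12 n20]]]]] := card_gt2P hM3.
pose Y := W :\: M.
have YP y : (y \in Y) = (y \notin M) && (y \in W) by rewrite inE.
pose f y := c y x0.
have inM y : y \in M -> y \in W := subsetP hMW y.
have R1 y : y \in Y -> f y \in S.
  rewrite YP => /andP [yM yW].
  have yx0 : y != x0 by neqt.
  have yx1 : y != x1 by neqt.
  rewrite /f hc; apply: (h3 x0 y x1) => //; try (by apply: inM); try (by rewrite eq_sym).
  by rewrite hc (hmod y x0 x1).
have R2 : {in Y &, injective f}.
  move=> y1 y2 hy1 hy2 e; apply/eqP; apply/negPn/negP => ny.
  have := hy1; have := hy2; rewrite !YP => /andP [y2M y2W] /andP [y1M y1W].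
  apply: (h5 x1 y1 x2 y2 x0 (f y1)) => //; try (by apply: inM).
  - dist.
  - exact: (R1 y1 hy1).
  - by rewrite hc (hmod y1 x1 x0).
  - by rewrite (hmod y1 x2 x0).
  - by rewrite hc e (hmod y2 x2 x0).
pose S' := S :\: [set f y | y in Y].
have hfS : [set f y | y in Y] \subset S.
  by apply/subsetP => j /imsetP [y hy ->]; apply: R1.
have cY : #|[set f y | y in Y]| = #|Y| by apply: card_in_imset.
have cS : #|S'| + #|Y| = #|S|.
  rewrite /S' cardsD (setIidPr hfS) -cY; have := subset_leq_card hfS; move=> h; by rewrite subnK.
have cM : #|M| + #|Y| = #|W|.
  rewrite /Y cardsD (setIidPr hMW); have := subset_leq_card hMW; lia.
have cYS : #|Y| <= #|S|.
  by rewrite -cY subset_leq_card.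
have cMW : #|M| < #|W|.
  rewrite ltn_neqAle subset_leq_card // andbT.
  apply: contra hMne => /eqP e; by rewrite eqEcard hMW e leqnn.
apply: (IH M S') => //.
- by apply: subsetDl.
- clear -cM cS cMW; lia.
- move=> a b d ha hb hd ab bd ad e.
  have hS : c a b \in S by apply: (h3 a b d) => //; apply: inM.
  rewrite inE hS andbT; apply/imsetP => [[y hy ey]].
  have := hy; rewrite YP => /andP [yM yW].
  have : 0 < #|M :\: [set a; b; d]|.
    rewrite cardsD; have h3s : #|M :&: [set a; b; d]| <= 3.
      exact: leq_trans (subset_leq_card (subsetIr _ _)) (card3le a b d).
    clear -h3s cM cS cYS hcard; lia.
  case/card_gt0P => x; rewrite !inE negb_or negb_or  -!andbA => /and4P [xa xb xd hx].
  apply: (h5 a b d y x (c a b)) => //; try (by apply: inM).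
  + dist.
  + by rewrite hc ey (hmod y d x0).
  + by rewrite ey (hmod y x x0).
- clear -cM cS cYS hcard; lia.
Qed.


Definition closedb (j : 'I_k) (W X : {set 'I_n}) :=
  (X \subset W) && [forall x in X, forall y in W :\: X, c x y != j].

Lemma closedP (j : 'I_k) (W X : {set 'I_n}) (x y : 'I_n) : closedb j W X -> x \in X -> y \in W -> y \notin X -> c x y != j.
Proof.
case/andP => _ /forall_inP H hx hy hyX.
by move/forall_inP: (H x hx) => /(_ y); apply; rewrite inE hyX.
Qed.

Lemma closedI (j : 'I_k) (W X : {set 'I_n}) : X \subset W ->
  (forall x y, x \in X -> y \in W -> y \notin X -> c x y != j) -> closedb j W X.
Proof.
move=> hXW H; rewrite /closedb hXW /=; apply/forall_inP => x hx.
apply/forall_inP => y; rewrite inE => /andP [hyX hy]; exact: H.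
Qed.

Lemma notclosed (j : 'I_k) (W X : {set 'I_n}) : X \subset W -> ~~ closedb j W X ->
  exists x y, [/\ x \in X, y \in W, y \notin X & c x y = j].
Proof.
move=> hXW hn; apply: NNPP => H; move/negP: hn; apply; apply: closedI => // x y hx hy hyX.
apply/eqP => e; apply: H; by exists x, y.
Qed.

Lemma case4 W S : NR W -> N5 W S -> N3 W S -> #|S| + 4 <= #|W| -> IHP W S ->
  forall a b d j, a \in W -> b \in W -> d \in W -> a != b -> b != d -> a != d ->
  c a b = j -> c b d = j -> j \in S -> False.
Proof.
move=> hR h5 h3 hcard IH a b d j ha hb hd ab bd ad eab ebd hj.
have hWc : closedb j W W by apply: closedI => // x y _ ->.
case: (@arg_minnP _ W (fun X => closedb j W X && (b \in X)) (fun X => #|X|)).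
  by rewrite hWc hb.
move=> X /andP [hXc hbX] hmin.
have hXW : X \subset W by case/andP: hXc.
have inX x : x \in X -> x \in W := subsetP hXW x.
have hmod : forall y x, y \in W -> y \notin X -> x \in X -> c y x = c y b.
  move=> y x0 hy hyX hx0.
  pose X1 := [set x in X | c y x == c y b].
  have X1P x : (x \in X1) = (x \in X) && (c y x == c y b) by rewrite inE.
  have hX1X : X1 \subset X by apply/subsetP => x; rewrite X1P => /andP [].
  have hX1c : closedb j W X1.
    apply: closedI; first exact: subset_trans hX1X hXW.
    move=> x z; rewrite X1P => /andP [hx /eqP ex] hz hzX1; apply/eqP => exz.
    case: (boolP (z \in X)) => hzX; last by move/negP: (closedP hXc hx hz hzX); apply; apply/eqP.
    have : c y z != c y b by move: hzX1; rewrite X1P hzX.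
    apply/negP/negPn/eqP.
    have xz : x != z by apply/eqP => E; subst; rewrite X1P hx ex eqxx in hzX1.
    have zy : z != y by neqt.
    have xy : x != y by neqt.
    have n1 : c x y != j := closedP hXc hx hy hyX.
    have n2 : c z y != j := closedP hXc hzX hy hyX.
    rewrite -ex hc (hc y x); apply/esym; apply: (tri hR (inX x hx) hz hy) => //.
    - by rewrite exz eq_sym.
    - by rewrite exz eq_sym.
  have := hmin X1; rewrite hX1c /= X1P hbX eqxx => /(_ isT) hc1.
  have : X1 == X by rewrite eqEcard hX1X hc1.
  move/eqP => E; move: hx0; rewrite -E X1P => /andP [_ /eqP].
  by [].
have haX : a \in X.
  apply/negPn/negP => haX; move/negP: (closedP hXc hbX ha haX); apply; apply/eqP; by rewrite hc.
have hdX : d \in X.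
  apply/negPn/negP => hdX; move/negP: (closedP hXc hbX hd hdX); apply; apply/eqP; by [].
have hX3 : 2 < #|X|.
  by apply/card_gt2P; exists a, b, d; split; split => //; rewrite eq_sym.
case: (boolP (X == W)) => hXW'; last first.
  apply: (caseR hR h5 h3 hcard IH hXW hXW' hX3) => y x1 x2 hy hyX hx1 hx2.
  by rewrite (hmod y x1) // (hmod y x2).
move/eqP: hXW' => EX.
have spanb : forall Z, closedb j W Z -> b \in Z -> Z = W.
  move=> Z hZ hbZ; have hZW : Z \subset W by case/andP: hZ.
  have := hmin Z; rewrite hZ hbZ EX => /(_ isT) hle.
  by apply/eqP; rewrite eqEcard hZW hle.
have span : forall Z, closedb j W Z -> forall x, x \in Z -> Z = W.
  move=> Z hZ x hx; have hZW : Z \subset W by case/andP: hZ.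
  case: (boolP (b \in Z)) => hbZ; first exact: spanb.
  have hZ' : closedb j W (W :\: Z).
    apply: closedI; first exact: subsetDl.
    move=> x' y'; rewrite !inE => /andP [hx'Z hx'W] hy' /nandP [hy'Z|]; last by rewrite hy'.
    rewrite negbK in hy'Z; rewrite hc; exact: closedP hZ hy'Z hx'W hx'Z.
  have := spanb _ hZ'; rewrite inE hbZ hb => /(_ isT) E.
  have : x \in W :\: Z by rewrite E (subsetP hZW).
  by rewrite inE hx.
have nc : forall (Z : {set 'I_n}) (x y : 'I_n), Z \subset W -> x \in Z -> y \in W -> y \notin Z ->
    exists x' y', [/\ x' \in Z, y' \in W, y' \notin Z & c x' y' = j].
  move=> Z x y hZW hx hy hyZ; apply: (notclosed hZW); apply/negP => hZ.
  by move: hyZ; rewrite (span Z hZ x hx) hy.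
have WS1 : 0 < #|S| by apply/card_gt0P; exists j.
case: (classic (exists u, u \in W /\ forall x, x \in W -> x != u -> c u x = j)) => [[u [hu hU]] | hnU].
  have cWu : #|W| = #|W :\ u| + 1 by rewrite (cardsD1 u W) hu addnC.
  have cSj : #|S| = #|S :\ j| + 1 by rewrite (cardsD1 j S) hj addnC.
  apply: (IH (W :\ u) (S :\ j)).
  - exact: subsetDl.
  - exact: subsetDl.
  - clear -cWu cSj; lia.
  - move=> a' b' d'; rewrite !in_setD1 => /andP [a'u ha'] /andP [b'u hb'] /andP [d'u hd'] ab' bd' ad' e'.
    have hS' := h3 a' b' d' ha' hb' hd' ab' bd' ad' e'.
    rewrite hS' andbT; apply/eqP => ej.
    have : 0 < #|(W :\ u) :\: [set a'; b'; d']|.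
      rewrite cardsD; have h3s : #|(W :\ u) :&: [set a'; b'; d']| <= 3.
        exact: leq_trans (subset_leq_card (subsetIr _ _)) (card3le a' b' d').
      clear -h3s cWu cSj hcard; lia.
    case/card_gt0P => x; rewrite !inE negb_or negb_or -!andbA => /and5P [xa xb xd xu hx].
    apply: (h5 a' b' d' u x j) => //.
    + dist.
    + by rewrite -e'.
    + by rewrite hc hU.
    + by rewrite hU.
  - clear -cWu cSj hcard; lia.
have hnU' : forall u, u \in W -> exists x, [/\ x \in W, x != u & c u x != j].
  move=> u hu; apply: NNPP => H; apply: hnU; exists u; split => // x hx xu.
  apply/eqP; apply/negPn/negP => H2; apply: H; by exists x.
pose Nu u := [set x in W | (x != u) && (c u x == j)].
have NuP u x : (x \in Nu u) = [&& x \in W, x != u & c u x == j] by rewrite inE.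
have W5 : 5 <= #|W| by clear -hcard WS1; lia.
case: (classic (exists u, u \in W /\ 2 < #|Nu u|)) => [[u [hu hN]] | hnD].
  have [w [hw wu cw]] := hnU' u hu.
  pose X0 := u |: Nu u.
  have hX0W : X0 \subset W.
    by apply/subsetP => x; rewrite in_setU1 NuP => /orP [/eqP -> | /and3P [hx _ _]].
  have hwX0 : w \notin X0 by rewrite in_setU1 NuP (negbTE wu) (negbTE cw) !andbF.
  have [v [b' [hv hb' hb'X0 evb]]] := nc X0 u w hX0W (setU11 u (Nu u)) hw hwX0.
  move: hb'X0; rewrite in_setU1 negb_or => /andP [b'u hb'N].
  have hvN : v \in Nu u.
    move: hv; rewrite in_setU1 => /orP [/eqP E|//]; subst v.
    by move/negP: hb'N; case; rewrite NuP hb' b'u evb eqxx.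
  have cub' : c u b' != j by move: hb'N; rewrite NuP hb' b'u.
  have : 1 < #|Nu u :\ v| by move: hN; rewrite (cardsD1 v) hvN; clear; lia.
  case/card_gt1P => a1 [a2 [ha1 ha2 a12]].
  have := hvN; rewrite NuP => /and3P [vW vu /eqP cuv].
  have key : forall x y, x \in Nu u :\ v -> y \in Nu u :\ v -> x != y ->
      (c v x != j) && (c x b' != j).
    move=> x y hx hy xy.
    have hxN : x \in Nu u by move: hx; rewrite in_setD1 => /andP [].
    have hyN : y \in Nu u by move: hy; rewrite in_setD1 => /andP [].
    have xv : x != v by move: hx; rewrite in_setD1 => /andP [].
    have yv : y != v by move: hy; rewrite in_setD1 => /andP [].
    have := hxN; have := hyN; rewrite !NuP => /and3P [yW yu /eqP cuy] /and3P [xW xu /eqP cux].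
    apply/andP; split; apply/eqP => E.
    - apply: (h5 b' v x u y j) => //.
      + dist.
      + by rewrite hc.
      + by rewrite hc.
    - apply: (h5 v b' x u y j) => //.
      + dist.
      + by rewrite hc.
      + by rewrite hc.
  have k1 := key a1 a2 ha1 ha2 a12.
  have a21 : a2 != a1 by rewrite eq_sym.
  have k2 := key a2 a1 ha2 ha1 a21.
  move: k1 k2 => /andP [k1a k1b] /andP [k2a k2b].
  have ha1N : a1 \in Nu u by move: ha1; rewrite in_setD1 => /andP [].
  have ha2N : a2 \in Nu u by move: ha2; rewrite in_setD1 => /andP [].
  have a1v : a1 != v by move: ha1; rewrite in_setD1 => /andP [].
  have a2v : a2 != v by move: ha2; rewrite in_setD1 => /andP [].
  have := ha1N; have := ha2N; rewrite !NuP => /and3P [a2W a2u /eqP cua2] /and3P [a1W a1u /eqP cua1].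
  have e1 z : z \in W -> z != u -> z != b' -> c u z = j -> c z b' != j -> c u b' = c z b'.
    move=> hz zu zb' cux cxb'.
    apply: (tri hR hu hz hb') => //.
    - by rewrite eq_sym.
    - by rewrite eq_sym.
    - by rewrite cux eq_sym.
    - by rewrite cux eq_sym.
  have e2 z : z \in W -> z != v -> z != b' -> c v z != j -> c z b' != j -> c v z = c b' z.
    move=> hz zv zb' cvx cxb'.
    apply: (tri hR vW hb' hz) => //.
    - by neqt.
    - by rewrite eq_sym.
    - by rewrite eq_sym.
    - by rewrite evb eq_sym.
    - by rewrite evb eq_sym hc.
  have a1b' : a1 != b' by neqt.
  have a2b' : a2 != b' by neqt.
  have E1 := e1 a1 a1W a1u a1b' cua1 k1b.
  have E2 := e1 a2 a2W a2u a2b' cua2 k2b.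
  have F1 := e2 a1 a1W a1v a1b' k1a k1b.
  have F2 := e2 a2 a2W a2v a2b' k2a k2b.
  apply: (h5 u b' a1 v a2 (c u b')) => //.
  - dist.
  - apply: (h3 u b' a1) => //; rewrite 1?eq_sym //. by rewrite E1 hc.
  - by rewrite E1 hc.
  - by rewrite hc F1 E1 hc.
  - by rewrite F2 E2 hc.
have hdeg : forall u, u \in W -> #|Nu u| <= 2.
  move=> u hu; rewrite leqNgt; apply/negP => H; apply: hnD; by exists u.
have H4 : forall p1 p2 p3 p4, p1 \in W -> p2 \in W -> p3 \in W -> p4 \in W ->
    p1 != p2 -> p1 != p3 -> p1 != p4 -> p2 != p3 -> p2 != p4 -> p3 != p4 ->
    c p1 p2 = j -> c p2 p3 = j -> c p3 p4 = j ->
    (forall x, x \in W -> x != p3 -> c p3 x = j -> x = p2 \/ x = p4) -> False.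
  move=> p1 p2 p3 p4 h1 h2 h3' h4 n12 n13 n14 n23 n24 n34 e12 e23 e34 hnb.
  pose X1 := [set p1; p2; p3; p4].
  have hX1W : X1 \subset W by apply/subsetP => x; rewrite !inE -!orbA => /or4P [] /eqP ->.
  have : 0 < #|W :\: X1|.
    rewrite cardsD; have h4s : #|W :&: X1| <= 4.
      exact: leq_trans (subset_leq_card (subsetIr _ _)) (card4le p1 p2 p3 p4).
    clear -h4s W5; lia.
  case/card_gt0P => w; rewrite inE => /andP [hwX1 hw].
  have hp1 : p1 \in X1 by rewrite !inE eqxx.
  have [x' [z [hx' hz hzX1 ex]]] := nc X1 p1 w hX1W hp1 hw hwX1.
  move: hzX1; rewrite !inE !negb_or -!andbA => /and4P [z1 z2 z3 z4].
  move: hx'; rewrite !inE -!orbA => /or4P [] /eqP E; subst x'.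
  - apply: (h5 z p1 p2 p3 p4 j) => //; first by dist.
    by rewrite hc.
  - have : 2 < #|Nu p2|.
      apply/card_gt2P; exists p1, p3, z; split; split.
      - by rewrite NuP h1 n12 hc e12 eqxx.
      - by rewrite NuP h3' (eq_sym p3) n23 e23 eqxx.
      - by rewrite NuP hz z2 ex eqxx.
      - exact: n13.
      - by rewrite eq_sym.
      - exact: z1.
    by rewrite ltnNge hdeg.
  - by case: (hnb z hz z3 ex) => E; subst; rewrite eqxx in z2 z4.
  - apply: (h5 p1 p2 p3 p4 z j) => //; by dist.
have nb : forall x, x \in W -> x != b -> c b x = j -> x = a \/ x = d.
  move=> x hx xb e; apply: NNPP => H.
  have xa : x != a by apply/eqP => E; apply: H; left.
  have xd : x != d by apply/eqP => E; apply: H; right.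
  have : 2 < #|Nu b|.
    apply/card_gt2P; exists a, d, x; split; split.
    - by rewrite NuP ha ab hc eab eqxx.
    - by rewrite NuP hd (eq_sym d) bd ebd eqxx.
    - by rewrite NuP hx xb e eqxx.
    - exact: ad.
    - by rewrite eq_sym.
    - exact: xa.
  by rewrite ltnNge hdeg.
pose X0 := [set a; b; d].
have hX0W : X0 \subset W by apply/subsetP => x; rewrite !inE -!orbA => /or3P [] /eqP ->.
have : 0 < #|W :\: X0|.
  rewrite cardsD; have h3s : #|W :&: X0| <= 3.
    exact: leq_trans (subset_leq_card (subsetIr _ _)) (card3le a b d).
  clear -h3s W5; lia.
case/card_gt0P => w; rewrite inE => /andP [hwX0 hw].
have hbX0 : b \in X0 by rewrite !inE eqxx orbT.
have [x' [y [hx' hy hyX0 ex]]] := nc X0 b w hX0W hbX0 hw hwX0.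
move: hyX0; rewrite !inE !negb_or -!andbA => /and3P [ya yb yd].
move: hx'; rewrite !inE -!orbA => /or3P [] /eqP E; subst x'.
- apply: (H4 y a b d) => //; try by rewrite eq_sym.
  by rewrite hc.
- by case: (nb y hy yb ex) => E; subst; rewrite eqxx in ya yd.
- apply: (H4 y d b a) => //; try by rewrite eq_sym.
  + by rewrite hc.
  + by rewrite hc.
  + by rewrite hc.
  + by move=> x hx xb e; case: (nb x hx xb e) => ->; [right|left].
Qed.


Lemma NR_sub (W W' : {set 'I_n}) : W' \subset W -> NR W -> NR W'.
Proof. move=> hs hR x y z hx hy hz; apply: hR; exact: (subsetP hs). Qed.

Lemma N5_sub (W W' : {set 'I_n}) (S S' : {set 'I_k}) : W' \subset W -> S' \subset S -> N5 W S -> N5 W' S'.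
Proof.
move=> hs hS h5 p1 p2 p3 p4 p5 j h1 h2 h3 h4 h5' hu hj.
apply: (h5 p1 p2 p3 p4 p5 j); try exact: (subsetP hs); try exact: (subsetP hS); done.
Qed.

Lemma mainQ m : forall (W : {set 'I_n}) (S : {set 'I_k}), #|W| + #|S| <= m ->
  NR W -> N5 W S -> N3 W S -> #|S| + 4 <= #|W| -> False.
Proof.
elim: m => [|m IHm] W S hm hR h5 h3 hcard; first by clear -hm hcard; lia.
have IH : IHP W S.
  move=> W' S' hW' hS' hlt h3' hc'.
  apply: (IHm W' S') => //; first by clear -hm hlt; lia.
  - exact: NR_sub hW' hR.
  - exact: N5_sub hW' hS' h5.
case: (classic (exists u w, [/\ u \in W, w \in W, u != w & c u w \notin S])).
  case=> u [w [hu hw uw hm']]; exact: (caseA hR h5 h3 hcard IH hu hw uw hm').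
move=> hnA.
have : 1 < #|W| by clear -hcard; lia.
case/card_gt1P => u [w [hu hw uw]].
have hj : c u w \in S.
  apply/negPn/negP => H; apply: hnA; by exists u, w.
case: (classic (N3 W (S :\ c u w))) => H.
  apply: (IH W (S :\ c u w)) => //.
  - exact: subsetDl.
  - by rewrite (cardsD1 (c u w) S) hj /= ltn_add2l add1n.
  - move: hcard; rewrite (cardsD1 (c u w) S) hj /= => h; apply: leq_trans _ h; by rewrite leq_add2r leq_addl.
apply: H => a b d ha hb hd ab bd ad e.
have hs := h3 a b d ha hb hd ab bd ad e.
rewrite in_setD1 hs andbT; apply/negP => /eqP ej.
apply: (case4 hR h5 h3 hcard IH ha hb hd ab bd ad ej); first by rewrite -e.
by rewrite -ej.
Qed.

End Main.

Lemma cardS_le k t (ht : t <= k) : #|[set j : 'I_k | val j < t]| <= t.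
Proof.
apply: (@leq_trans #|[set widen_ord ht i | i in 'I_t]|); last first.
  by apply: leq_trans (leq_imset_card _ _) _; rewrite card_ord.
apply: subset_leq_card; apply/subsetP => j; rewrite inE => hj.
apply/imsetP; exists (Ordinal hj) => //; exact: val_inj.
Qed.

Theorem lemma1 (k t : nat) (hk : 2 <= k) (ht : t <= k) (n : nat) (hn : t + 4 <= n)
  (c : 'I_n -> 'I_n -> 'I_k) (hc : edge_coloring c) :
  has_rainbow_triangle c \/
  (exists j : 'I_k, val j < t /\ has_mono_path c 5 j) \/
  (exists j : 'I_k, t <= val j /\ has_mono_path c 3 j).
Proof.
apply: NNPP => H.
have hnr : ~ has_rainbow_triangle c by move=> h; apply: H; left.
have hn5 : ~ (exists j : 'I_k, val j < t /\ has_mono_path c 5 j) by move=> h; apply: H; right; left.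
have hn3 : ~ (exists j : 'I_k, t <= val j /\ has_mono_path c 3 j) by move=> h; apply: H; right; right.
pose S := [set j : 'I_k | val j < t].
apply: (@mainQ n k c hc (#|[set: 'I_n]| + #|S|) [set: 'I_n] S) => //.
- move=> x y z _ _ _ xy yz xz; apply/negPn/negP => Hn; apply: hnr; exists x, y, z.
  move: Hn; rewrite !negb_or => /and3P [h1 h2 h3]; by split.
- move=> p1 p2 p3 p4 p5 j _ _ _ _ _ hu hj e1 e2 e3 e4; apply: hn5; exists j.
  split; first by move: hj; rewrite inE.
  exists (fun i : 'I_5 => nth p1 [:: p1; p2; p3; p4; p5] i); split.
  + move=> i1 i2 /eqP; rewrite nth_uniq // => /eqP; exact: val_inj.
  + move=> [i1 hi1] [i2 hi2] /= E; subst i2.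
    by case: i1 hi1 hi2 => [|[|[|[|[|?]]]]].
- move=> a b d _ _ _ ab bd ad e; rewrite inE ltnNge; apply/negP => hge; apply: hn3.
  exists (c a b); split => //.
  exists (fun i : 'I_3 => nth a [:: a; b; d] i); split.
  + move=> i1 i2 /eqP; rewrite nth_uniq //= ?inE ?negb_or ?ab ?ad ?bd // => /eqP; exact: val_inj.
  + move=> [i1 hi1] [i2 hi2] /= E; subst i2.
    by case: i1 hi1 hi2 => [|[|[|?]]].
- rewrite cardsT card_ord; apply: leq_trans hn; rewrite leq_add2r; exact: cardS_le.
Qed.
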